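(* Let $\bar\ell,m,n,k$ satisfy $m<1+n/\bar\ell$, $1\le k\le m$, and let $q=2^t\ge n+k$. Then there exists an $[[n,k,d]]_q$ qudit CSS code $\mathcal Q$ with $d\ge\min(n-m+1,m-k+1)$ such that for any $e,\ell\le\bar\ell$, every $e$-variate polynomial $P$ over $\mathbb F_q$ of degree at most $\ell$, every $A\in[k]$ and every $\beta\in\mathbb F_q$, there is a transversal (depth-one, single-qudit-per-position) physical gate $\bigotimes_{i=1}^nU_P^{\beta_i}[i]$ on $e$ code blocks which acts on $\mathcal Q^{\otimes e}$, up to a global phase, as $\overline{U_P^\beta[A]}$, i.e. multiplies $\overline{\ket{u^{(1)}}}\cdots\overline{\ket{u^{(e)}}}$ by $(-1)^{\mathrm{tr}(\beta P(u^{(1)}_A,\dots,u^{(e)}_A))}$. In particular this includes single-index addressable $\mathsf{C^{(\ell-1)}Z}$ gates across $\ell$ blocks and addressable single-qudit gates $U_\ell^\beta$. Choosing $m=\lfloor n/\bar\ell\rfloor$ and $k=m/2$, the codes are asymptotically good over growing $q$ with rate and relative distance at least $1/(2\bar\ell)$ asymptotically. *)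

(* Defs.v *)
From HB Require Import structures.
From mathcomp Require Import all_boot all_order all_algebra all_field.
From mathcomp Require Import mpoly.
Set Implicit Arguments.
Unset Strict Implicit.
Unset Printing Implicit Defensive.
Import Order.TTheory GRing.Theory Num.Theory.
Local Open Scope ring_scope.

Section QuditCSS.
Variable F : finFieldType.

Definition is_linear_code n (C : {set 'rV[F]_n}) : Prop :=
  0 \in C /\ forall (a : F) (x y : 'rV[F]_n), x \in C -> y \in C -> a *: x + y \in C.

Definition dotv n (x y : 'rV[F]_n) : F := \sum_(i < n) x 0 i * y 0 i.

Definition dual_code n (C : {set 'rV[F]_n}) : {set 'rV[F]_n} :=
  [set y | [forall x in C, dotv x y == 0]].

Definition wt n (x : 'rV[F]_n) : nat := #|[set i : 'I_n | x 0 i != 0]|.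

(* An [[n,k]]_q qudit CSS code CSS(X,C1;Z,C2) with C2^perp <= C1, together with a
   linear encoding matrix G : F^k -> C1 whose image is a complement of C2^perp in C1.
   The logical basis state |u> (u in F^k) is the uniform superposition over the coset
   u G + C2^perp. *)
Definition is_CSS_code n k (C1 C2 : {set 'rV[F]_n}) (G : 'M[F]_(k, n)) : Prop :=
  [/\ is_linear_code C1 /\ is_linear_code C2,
      dual_code C2 \subset C1,
      (forall u : 'rV[F]_k, u *m G \in C1),
      (forall u : 'rV[F]_k, u *m G \in dual_code C2 -> u = 0)
    & #|C1| = (#|F| ^ k * #|dual_code C2|)%N ].

Definition css_dist_ge n (C1 C2 : {set 'rV[F]_n}) (d : nat) : Prop :=
  (forall x, x \in C1 -> x \notin dual_code C2 -> (d <= wt x)%N) /\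
  (forall x, x \in C2 -> x \notin dual_code C1 -> (d <= wt x)%N).

(* absolute trace F_q -> F_2 (valued in the prime subfield {0,1} of F), q = 2^t *)
Definition abs_trace (x : F) : F := \sum_(i < logn 2 #|F|) x ^+ (2 ^ i).

Definition sgnF (a : F) : algC := if abs_trace a == 0 then 1 else -1.

(* (unnormalized) states of e code blocks of n qudits each: amplitude functions
   on computational basis states x = (x^(1),...,x^(e)) *)
Definition state n e := {ffun 'I_e -> 'rV[F]_n} -> algC.

Definition logical_ket n k e (C2 : {set 'rV[F]_n}) (G : 'M[F]_(k, n))
  (u : 'I_e -> 'rV[F]_k) : state n e :=
  fun x => if [forall j, x j - u j *m G \in dual_code C2] then 1 else 0.

Definition phys_gate n e (P : {mpoly F[e]}) (bs : 'I_n -> F) (psi : state n e) : state n e :=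
  fun x => (\prod_(i < n) sgnF (bs i * meval (fun j => x j 0 i) P)) * psi x.

End QuditCSS.

(* Main.v *)
Require Import Defs.
From HB Require Import structures.
From mathcomp Require Import all_boot all_order all_algebra all_field.
From mathcomp Require Import mpoly.
From mathcomp Require Import zify.
Import Order.TTheory GRing.Theory Num.Theory.
Local Open Scope ring_scope.
Set Implicit Arguments. Unset Strict Implicit.

Section Newton.
Variable F : fieldType.
Fixpoint newt (s : seq F) (v : F -> F) : {poly F} :=
  match s with
  | [::] => 0
  | x0 :: s' => let p := newt s' v in let Q := \prod_(y <- s') ('X - y%:P) in
      p + ((v x0 - p.[x0]) / Q.[x0]) *: Q
  end.

Lemma size_newt s v : (size (newt s v) <= size s)%N.
Proof.
elim: s => [|x0 s IH] /=; first by rewrite size_poly0.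
apply: leq_trans (size_polyD _ _) _; rewrite geq_max (leq_trans IH) //=.
by apply: leq_trans (size_scale_leq _ _) _; rewrite size_prod_XsubC.
Qed.

Lemma newtE s v x : uniq s -> x \in s -> (newt s v).[x] = v x.
Proof.
elim: s => [|x0 s IH] //= /andP[nx0 us]; rewrite inE hornerD hornerZ.
have rQ y : y \in s -> (\prod_(y0 <- s) ('X - y0%:P)).[y] = 0.
  by move=> ys; apply/eqP; rewrite -/(root _ y) root_prod_XsubC.
case/orP => [/eqP ->|xs]; last by rewrite IH // (rQ x) // mulr0 addr0.
have nz : (\prod_(y0 <- s) ('X - y0%:P)).[x0] != 0.
  by rewrite -/(root _ x0) root_prod_XsubC.
by rewrite divfK // addrC subrK.
Qed.

Lemma poly_uniq0 (s : seq F) (p : {poly F}) :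
  uniq s -> (size p <= size s)%N -> (forall x, x \in s -> p.[x] = 0) -> p = 0.
Proof.
move=> us sz h; apply/eqP; apply/negPn/negP => pn0.
have hr : all (root p) s by apply/allP => x /h /eqP.
by have := max_poly_roots pn0 hr us; rewrite ltnNge sz.
Qed.

Lemma poly_sizeK N (r : {poly F}) : (size r <= N)%N -> \poly_(j < N) r`_j = r.
Proof.
move=> h; apply/polyP => j; rewrite coef_poly; case: ifP => // /negbT.
by rewrite -leqNgt => hj; rewrite nth_default // (leq_trans h).
Qed.
End Newton.
Section Dual.
Variable F : finFieldType.

Lemma dotvE n (x y : 'rV[F]_n) : dotv x y = (x *m y^T) 0 0.
Proof. by rewrite /dotv mxE; apply: eq_bigr => i _; rewrite mxE. Qed.

Lemma dual_rowspace r n (M : 'M[F]_(r, n)) :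
  dual_code [set v : 'rV[F]_n | (v <= M)%MS] = [set v | (v <= kermx M^T)%MS].
Proof.
apply/setP => y; rewrite !inE sub_kermx; apply/forallP/eqP.
- move=> h; apply/matrixP => i j; rewrite ord1 !mxE.
  have := h (row j M); rewrite inE row_sub /= dotvE mxE => /eqP H.
  by rewrite -[RHS]H; apply: eq_bigr => l _; rewrite !mxE mulrC.
- move=> h x; apply/implyP; rewrite inE => /submxP[w ->].
  rewrite dotvE -mulmxA -[M](trmxK M) -trmx_mul h trmx0 mulmx0 mxE.
  by [].
Qed.

Lemma dual_dual r n (M : 'M[F]_(r, n)) :
  dual_code (dual_code [set v : 'rV[F]_n | (v <= M)%MS]) = [set v | (v <= M)%MS].
Proof.
rewrite !dual_rowspace; set K := kermx M^T.
have h1 : (M <= kermx K^T)%MS.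
  by rewrite sub_kermx -[M](trmxK M) -trmx_mul mulmx_ker trmx0.
have h2 : (kermx K^T <= M)%MS.
  rewrite -(geq_leqif (mxrank_leqif_sup h1)) !mxrank_ker mxrank_tr mxrank_ker mxrank_tr.
  by rewrite subKn ?rank_leq_col.
by apply/setP => v; rewrite !inE; apply/idP/idP => h; [apply: submx_trans h2| apply: submx_trans h1].
Qed.

Lemma card_rowspace r n (M : 'M[F]_(r, n)) : injective (fun w : 'rV[F]_r => w *m M) ->
  #|[set v : 'rV[F]_n | (v <= M)%MS]| = (#|F| ^ r)%N.
Proof.
move=> inj; have -> : [set v : 'rV[F]_n | (v <= M)%MS] = (fun w : 'rV[F]_r => w *m M) @: [set: 'rV[F]_r].
  apply/setP => v; rewrite inE; apply/submxP/imsetP => [[w ->]|[w _ ->]]; first by exists w.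
  by exists w.
by rewrite card_imset // cardsT card_mx mul1n.
Qed.

Lemma linear_rowspace r n (M : 'M[F]_(r, n)) : is_linear_code [set v : 'rV[F]_n | (v <= M)%MS].
Proof.
split; first by rewrite inE sub0mx.
by move=> a x y; rewrite !inE => hx hy; rewrite addmx_sub ?scalemx_sub.
Qed.

Lemma linear_dual n (C : {set 'rV[F]_n}) : is_linear_code (dual_code C).
Proof.
split.
  rewrite inE; apply/forallP => x; apply/implyP => _.
  by rewrite /dotv big1 // => i _; rewrite mxE mulr0.
move=> a x y; rewrite !inE => /forallP hx /forallP hy; apply/forallP => z; apply/implyP => zC.
have /eqP := implyP (hx z) zC; have /eqP := implyP (hy z) zC.
rewrite /dotv => e2 e1.
rewrite (eq_bigr (fun i => a * (z 0 i * x 0 i) + z 0 i * y 0 i)).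
  by rewrite big_split /= -mulr_sumr e1 e2 mulr0 addr0.
by move=> i _; rewrite !mxE mulrDr mulrCA.
Qed.
End Dual.

Section Trace.
Variables (t : nat) (F : finFieldType).
Hypothesis ht : #|F| = (2 ^ t)%N.

Lemma char2F : (2 \in [char F])%N.
Proof. by apply: (card_finPcharP ht). Qed.

Lemma logF : logn 2 #|F| = t.
Proof. by rewrite ht pfactorK. Qed.

Lemma tr_add (a b : F) : abs_trace (a + b) = abs_trace a + abs_trace b.
Proof.
rewrite /abs_trace -big_split /=; apply: eq_bigr => i _.
apply: exprDn_char; rewrite pnatX pnatE //= ?char2F //.
Qed.

Lemma tr0 : abs_trace (0 : F) = 0.
Proof. by rewrite /abs_trace big1 // => i _; rewrite expr0n expn_eq0. Qed.

Lemma tr01 (a : F) : abs_trace a = 0 \/ abs_trace a = 1.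
Proof.
have h2 : abs_trace a ^+ 2 = abs_trace a.
  have := Frobenius_autE char2F (abs_trace a); rewrite -/(_ ^+ 2) => <-.
  rewrite /abs_trace rmorph_sum /= logF.
  under eq_bigr => i _ do rewrite Frobenius_autE -exprM -expnSr.
  have := @big_ord_recl F 0 +%R t (fun i : 'I_t.+1 => a ^+ (2 ^ i)).
  rewrite big_ord_recr /= expn0 expr1 -ht expf_card => H.
  apply: (addIr a); rewrite H addrC; congr (_ + _).
have : abs_trace a * (abs_trace a - 1) = 0 by rewrite mulrBr -expr2 h2 mulr1 subrr.
by move/eqP; rewrite mulf_eq0 subr_eq0 => /orP[/eqP|/eqP]; [left|right].
Qed.

Lemma sgnF_add (a b : F) : sgnF (a + b) = sgnF a * sgnF b.
Proof.
rewrite /sgnF tr_add.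
have h2 : (1 + 1 : F) = 0 by have := charf0 char2F; rewrite -[2%N]/(1+1)%N natrD.
case: (tr01 a) => ->; case: (tr01 b) => ->;
  rewrite ?addr0 ?add0r ?h2 ?eqxx ?oner_eq0 ?mulr1 ?mul1r ?mulrNN //.
all: by rewrite mulr1.
Qed.

Lemma sgnF_sum n (f : 'I_n -> F) : \prod_(i < n) sgnF (f i) = sgnF (\sum_(i < n) f i).
Proof.
apply/esym/(big_morph _ sgnF_add).
by rewrite /sgnF tr0 eqxx.
Qed.
End Trace.

Section Construction.
Variables (F : finFieldType) (n k m : nat) (pts : 'I_(n+k) -> F).
Hypotheses (pts_inj : injective pts) (hmn : (m <= n)%N) (hkm : (k <= m)%N).

Definition al (i : 'I_n) := pts (lshift k i).
Definition ga (a : 'I_k) := pts (rshift n a).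
Lemma al_inj : injective al.
Proof. by move=> i j /pts_inj /lshift_inj. Qed.
Lemma ga_inj : injective ga.
Proof. by move=> i j /pts_inj /rshift_inj. Qed.
Lemma al_ga i a : al i != ga a.
Proof. apply/eqP => /pts_inj /(congr1 val) /=; have := ltn_ord i; lia. Qed.

Definition sA := [seq al i | i <- enum 'I_n].
Definition sG := [seq ga a | a <- enum 'I_k].
Lemma uniq_sA : uniq sA.
Proof. by rewrite map_inj_uniq ?enum_uniq //; apply: al_inj. Qed.
Lemma uniq_sG : uniq sG.
Proof. by rewrite map_inj_uniq ?enum_uniq //; apply: ga_inj. Qed.
Lemma size_sA : size sA = n.
Proof. by rewrite size_map size_enum_ord. Qed.
Lemma size_sG : size sG = k.
Proof. by rewrite size_map size_enum_ord. Qed.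
Lemma al_sA i : al i \in sA.
Proof. by apply: map_f; rewrite mem_enum. Qed.
Lemma ga_sG a : ga a \in sG.
Proof. by apply: map_f; rewrite mem_enum. Qed.

Definition Z : {poly F} := \prod_(y <- sG) ('X - y%:P).
Lemma size_Z : size Z = k.+1.
Proof. by rewrite size_prod_XsubC size_sG. Qed.
Lemma Z_ga a : Z.[ga a] = 0.
Proof. by apply/eqP; rewrite -/(root _ _) root_prod_XsubC ga_sG. Qed.
Lemma Z_al i : Z.[al i] != 0.
Proof.
rewrite -/(root _ _) root_prod_XsubC; apply/mapP => [[a _ /eqP]].
by rewrite (negbTE (al_ga i a)).
Qed.
Lemma Z_neq0 : Z != 0.
Proof. by rewrite -size_poly_eq0 size_Z. Qed.

Definition ev (p : {poly F}) : 'rV[F]_n := \row_i p.[al i].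
Lemma evD (p q : {poly F}) : ev (p + q) = ev p + ev q.
Proof. by apply/rowP => i; rewrite !mxE hornerD. Qed.
Lemma ev_eq0 (p : {poly F}) : (size p <= n)%N -> ev p = 0 -> p = 0.
Proof.
move=> sz h; apply: (@poly_uniq0 _ sA p uniq_sA); first by rewrite size_sA.
move=> x /mapP[i _ ->]; have /rowP /(_ i) := h; by rewrite !mxE.
Qed.

Definition La a := newt sG (fun x => (x == ga a)%:R).
Lemma La_ga a b : (La a).[ga b] = (b == a)%:R.
Proof. by rewrite /La newtE ?uniq_sG ?ga_sG // (inj_eq ga_inj). Qed.
Lemma size_La a : (size (La a) <= k)%N.
Proof. by rewrite -size_sG size_newt. Qed.

Definition G : 'M[F]_(k, n) := \matrix_(a < k, i < n) (La a).[al i].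
Definition MD : 'M[F]_(m - k, n) := \matrix_(j < m - k, i < n) ('X^j * Z).[al i].
Definition fu (u : 'rV[F]_k) := \sum_a u 0 a *: La a.
Definition ph (h : 'rV[F]_(m - k)) := \sum_(j < m - k) h 0 j *: 'X^j.
Lemma size_ph h : (size (ph h) <= m - k)%N.
Proof.
rewrite /ph; apply: (big_ind (fun p : {poly F} => size p <= m - k)%N).
- by rewrite size_poly0.
- by move=> p q hp hq; apply: leq_trans (size_polyD _ _) _; rewrite geq_max hp hq.
- by move=> a _; apply: leq_trans (size_scale_leq _ _) _; rewrite size_polyXn.
Qed.
Lemma coef_ph h (j : 'I_(m - k)) : (ph h)`_j = h 0 j.
Proof.
rewrite /ph coef_sum (bigD1 j) //= coefZ coefXn eqxx mulr1 big1 ?addr0 //.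
move=> i nij; rewrite coefZ coefXn.
have -> : (j == i :> nat) = false by rewrite eq_sym; exact: negbTE nij.
by rewrite mulr0.
Qed.
Lemma ph_row (r : {poly F}) : (size r <= m - k)%N -> ph (\row_(j < m - k) r`_j) = r.
Proof.
move=> sz; rewrite -{2}(poly_sizeK sz) poly_def /ph.
by apply: eq_bigr => j _; rewrite mxE.
Qed.

Lemma mul_eval r (w : 'rV[F]_r) (q : 'I_r -> {poly F}) :
  w *m \matrix_(j, i) (q j).[al i] = ev (\sum_j w 0 j *: q j).
Proof.
apply/rowP => i; rewrite !mxE horner_sum; apply: eq_bigr => j _.
by rewrite !mxE hornerZ.
Qed.

Lemma mulG u : u *m G = ev (fu u).
Proof. exact: mul_eval. Qed.
Lemma mulMD h : h *m MD = ev (ph h * Z).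
Proof.
rewrite mul_eval /ph mulr_suml; congr ev; apply: eq_bigr => j _.
by rewrite scalerAl.
Qed.

Lemma size_fu u : (size (fu u) <= k)%N.
Proof.
rewrite /fu; apply: (big_ind (fun p : {poly F} => size p <= k)%N).
- by rewrite size_poly0.
- by move=> p q hp hq; apply: leq_trans (size_polyD _ _) _; rewrite geq_max hp hq.
- by move=> a _; apply: leq_trans (size_scale_leq _ _) (size_La a).
Qed.

Lemma fu_ga u b : (fu u).[ga b] = u 0 b.
Proof.
rewrite /fu horner_sum (bigD1 b) //= hornerZ La_ga eqxx mulr1 big1 ?addr0 //.
by move=> a /negbTE nab; rewrite hornerZ La_ga eq_sym nab mulr0.
Qed.

Lemma size_phZ h : (size (ph h * Z)%R <= m)%N.
Proof.
apply: leq_trans (size_polyMleq _ _) _; rewrite size_Z.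
have := size_ph h; lia.
Qed.

Lemma size_fuphZ u h : (size (fu u + ph h * Z)%R <= m)%N.
Proof.
apply: leq_trans (size_polyD _ _) _; rewrite geq_max size_phZ andbT.
exact: leq_trans (size_fu u) hkm.
Qed.

Lemma kerM (u : 'rV[F]_k) (h : 'rV[F]_(m - k)) : u *m G + h *m MD = 0 -> u = 0 /\ h = 0.
Proof.
rewrite mulG mulMD -evD => /ev_eq0 e0.
have p0 := e0 (leq_trans (size_fuphZ u h) hmn).
have u0 : u = 0.
  apply/rowP => b; rewrite mxE -fu_ga.
  by have := congr1 (horner^~ (ga b)) p0; rewrite /= hornerD hornerM Z_ga mulr0 addr0 horner0.
split => //; move: p0; rewrite u0 /fu big1 ?add0r; last by move=> a _; rewrite mxE scale0r.
move/eqP; rewrite mulf_eq0 (negbTE Z_neq0) orbF => /eqP hp.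
apply/rowP => j; rewrite mxE.
by have := congr1 (fun p : {poly F} => p`_j) hp; rewrite /= coef_ph coef0.
Qed.

Lemma injM : injective (fun w : 'rV[F]_(k + (m - k)) => w *m col_mx G MD).
Proof.
move=> w1 w2 /= /eqP; rewrite -subr_eq0 -mulmxBl => /eqP.
rewrite -(hsubmxK (w1 - w2)) mul_row_col => /kerM [l0 r0].
by apply/eqP; rewrite -subr_eq0 -(hsubmxK (w1 - w2)) l0 r0 row_mx0.
Qed.

Lemma injMD : injective (fun w : 'rV[F]_(m - k) => w *m MD).
Proof.
move=> w1 w2 /= /eqP; rewrite -subr_eq0 -mulmxBl => /eqP h.
have := @kerM 0 (w1 - w2); rewrite mul0mx add0r => /(_ h) [_ /eqP].
by rewrite subr_eq0 => /eqP.
Qed.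

Definition D : {set 'rV[F]_n} := [set v | (v <= MD)%MS].
Definition C1 : {set 'rV[F]_n} := [set v | (v <= col_mx G MD)%MS].
Definition C2 := dual_code D.
Lemma dC2 : dual_code C2 = D.
Proof. exact: dual_dual. Qed.

Lemma ev0 : ev 0 = 0.
Proof. by apply/rowP => i; rewrite !mxE horner0. Qed.

Lemma C1_ev v : v \in C1 -> exists p : {poly F}, (size p <= m)%N /\ v = ev p.
Proof.
rewrite inE => /submxP[w ->]; rewrite -(hsubmxK w) mul_row_col mulG mulMD -evD.
by exists (fu (lsubmx w) + ph (rsubmx w) * Z); split; first exact: size_fuphZ.
Qed.

Lemma css : is_CSS_code C1 C2 G.
Proof.
split.
- by split; [apply: linear_rowspace | apply: linear_dual].
- rewrite dC2; apply/subsetP => v; rewrite !inE => h; apply: submx_trans h _.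
  by rewrite -addsmxE addsmxSr.
- by move=> u; rewrite inE -addsmxE; apply: submx_trans (addsmxSl G MD); apply: submxMl.
- move=> u; rewrite dC2 inE => /submxP[h e].
  have := @kerM u (- h); rewrite mulNmx e subrr => /(_ erefl) [].
  by [].
- by rewrite dC2 /C1 /D !card_rowspace ?expnD //; [apply: injMD | apply: injM].
Qed.

Lemma dist1 x : x \in C1 -> x \notin dual_code C2 -> (n - m + 1 <= wt x)%N.
Proof.
rewrite dC2 => /C1_ev[p [szp ->]] nD.
have pn0 : p != 0.
  apply/eqP => p0; move: nD; rewrite p0 ev0 inE sub0mx //.
set S := [set i | ev p 0 i == 0].
have hS : (#|S| < m)%N.
  have us : uniq [seq al i | i <- enum S] by rewrite map_inj_uniq ?enum_uniq //; apply: al_inj.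
  have hr : all (root p) [seq al i | i <- enum S].
    apply/allP => z /mapP[i]; rewrite mem_enum inE mxE => /eqP h ->.
    by apply/eqP.
  have := max_poly_roots pn0 hr us; rewrite size_map -cardE => h.
  exact: leq_trans h szp.
have -> : wt (ev p) = #|~: S|.
  rewrite /wt; have -> // : [set i | ev p 0 i != 0] = ~: S.
  by apply/setP => i; rewrite !inE.
have := cardsC S; rewrite card_ord; lia.
Qed.

Lemma dist2 x : x \in C2 -> x \notin dual_code C1 -> (m - k + 1 <= wt x)%N.
Proof.
move=> xC2 nx; rewrite leqNgt; apply/negP => hw; move/negP: nx; apply.
rewrite inE; apply/forallP => y; apply/implyP => /C1_ev [f [szf ->]].
set S := [set i | x 0 i != 0].
have hS : (#|S| <= m - k)%N by move: hw; rewrite /wt -/S; lia.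
set s := [seq al i | i <- enum S].
have us : uniq s by rewrite map_inj_uniq ?enum_uniq //; apply: al_inj.
set r := newt s (fun z => f.[z] / Z.[z]).
have szr : (size r <= m - k)%N.
  by apply: leq_trans (size_newt _ _) _; rewrite size_map -cardE.
have rD : ev (r * Z) \in D.
  by rewrite inE -(ph_row szr) -mulMD submxMl.
move: xC2; rewrite inE => /forallP /(_ (ev (r * Z))); rewrite rD /= => /eqP h0.
rewrite -h0 /dotv; apply/eqP; apply: eq_bigr => i _; rewrite !mxE.
case: (x 0 i =P 0) => [->|nz]; first by rewrite !mulr0.
congr (_ * _); rewrite hornerM /r newtE //; first by rewrite divfK // Z_al.
by apply: map_f; rewrite mem_enum inE; apply/eqP.
Qed.

Definition Lam i := newt sA (fun z => (z == al i)%:R).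

Lemma rep (g : {poly F}) c : (size g <= n)%N -> g.[c] = \sum_i g.[al i] * (Lam i).[c].
Proof.
move=> szg.
have hg : g = \sum_i g.[al i] *: Lam i.
  apply/eqP; rewrite -subr_eq0; apply/eqP; apply: (@poly_uniq0 _ sA _ uniq_sA).
  - apply: leq_trans (size_polyD _ _) _; rewrite geq_max size_polyN size_sA szg /=.
    apply: (big_ind (fun p : {poly F} => size p <= n)%N).
    + by rewrite size_poly0.
    + by move=> p q hp hq; apply: leq_trans (size_polyD _ _) _; rewrite geq_max hp hq.
    + by move=> i _; apply: leq_trans (size_scale_leq _ _) _; rewrite -size_sA size_newt.
  - move=> z /mapP[j _ ->]; rewrite hornerD hornerN horner_sum (bigD1 j) //= hornerZ.
    rewrite /Lam newtE ?uniq_sA ?al_sA // eqxx mulr1 big1 ?addr0 ?subrr //.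
    move=> i nij; rewrite hornerZ newtE ?uniq_sA ?al_sA // (inj_eq al_inj).
    by rewrite eq_sym (negbTE nij) mulr0.
by rewrite {1}hg horner_sum; apply: eq_bigr => i _; rewrite hornerZ.
Qed.

Section Comp.
Variables (e : nat) (p : 'I_e -> {poly F}) (P : {mpoly F[e]}).
Definition gP : {poly F} := \sum_(mm <- msupp P) P@_mm *: \prod_(j < e) p j ^+ mm j.

Lemma gP_horner c : gP.[c] = meval (fun j => (p j).[c]) P.
Proof.
rewrite mevalE horner_sum; apply: eq_bigr => mm _; rewrite hornerZ horner_prod.
by congr (_ * _); apply: eq_bigr => j _; rewrite horner_exp.
Qed.

Hypothesis szp : forall j, (size (p j) <= m)%N.

Lemma size_prod_pow (mm : 'X_{1..e}) (r : seq 'I_e) :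
  (size (\prod_(j <- r) p j ^+ mm j)%R <= ((m.-1) * \sum_(j <- r) mm j).+1)%N.
Proof.
elim: r => [|j r IH]; first by rewrite !big_nil size_poly1.
rewrite !big_cons; apply: leq_trans (size_polyMleq _ _) _.
have h1 : (size (p j ^+ mm j)%R <= ((m.-1) * mm j).+1)%N.
  apply: leq_trans (size_poly_exp_leq _ _) _; rewrite ltnS leq_mul2r.
  by rewrite -!subn1 leq_sub2r ?szp ?orbT.
move: IH h1; rewrite mulnDr.
move: (m.-1 * mm j)%N (m.-1 * \sum_(j0 <- r) mm j0)%N (size (p j ^+ mm j)%R) (size (\prod_(j0 <- r) p j0 ^+ mm j0)%R) => X Y a b.
lia.
Qed.

Lemma size_gP l : (msize P <= l.+1)%N -> (size gP <= ((m.-1) * l).+1)%N.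
Proof.
move=> hP; rewrite /gP big_seq; apply: (big_ind (fun q : {poly F} => size q <= ((m.-1) * l).+1)%N).
- by rewrite size_poly0.
- by move=> q1 q2 h1 h2; apply: leq_trans (size_polyD _ _) _; rewrite geq_max h1 h2.
- move=> mm hm; apply: leq_trans (size_scale_leq _ _) _.
  apply: leq_trans (size_prod_pow mm _) _; rewrite ltnS leq_mul2l -mdegE.
  have := msize_mdeg_lt hm; rewrite orbC; move: hP; rewrite /= => hP h.
  by apply/orP; left; rewrite -ltnS (leq_trans h hP).
Qed.
End Comp.

Lemma gate t (ht : #|F| = (2 ^ t)%N) e (P : {mpoly F[e]}) l (A : 'I_k) beta :
  (msize P <= l.+1)%N -> ((m.-1) * l < n)%N ->
  forall (u : 'I_e -> 'rV[F]_k) (x : {ffun 'I_e -> 'rV[F]_n}),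
  phys_gate P (fun i => beta * (Lam i).[ga A]) (logical_ket C2 G u) x =
  1 * sgnF (beta * meval (fun j => u j 0 A) P) * logical_ket C2 G u x.
Proof.
move=> hP hl u x; rewrite /phys_gate /logical_ket.
case: ifP => [/forallP hx|_]; last by rewrite !mulr0.
have : forall j, exists h : 'rV[F]_(m - k), x j - u j *m G = h *m MD.
  by move=> j; have := hx j; rewrite dC2 inE => /submxP [h eh]; exists h.
case/fin_all_exists => hs Hs.
pose p j := fu (u j) + ph (hs j) * Z.
have xp j i : x j 0 i = (p j).[al i].
  have -> : x j = u j *m G + hs j *m MD by rewrite -Hs addrC subrK.
  by rewrite mulG mulMD -evD mxE.
have pA j : (p j).[ga A] = u j 0 A.
  by rewrite hornerD hornerM Z_ga mulr0 addr0 fu_ga.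
have szp j : (size (p j) <= m)%N by apply: size_fuphZ.
rewrite (eq_bigr (fun i => sgnF (beta * (Lam i).[ga A] * (gP p P).[al i]))); last first.
  move=> i _; have -> // : meval (fun j => x j 0 i) P = (gP p P).[al i].
  by rewrite gP_horner; apply: meval_eq => j; rewrite xp.
rewrite (sgnF_sum ht) !mulr1 mul1r; congr sgnF.
rewrite -(meval_eq _ pA) -gP_horner (rep _ (leq_trans (size_gP szp hP) hl)).
by rewrite mulr_sumr; apply: eq_bigr => i _; rewrite -mulrA (mulrC (Lam i).[ga A]).
Qed.
End Construction.

Unset Implicit Arguments.

Theorem theorem5p3 (lbar m n k t : nat) (F : finFieldType) :
  (0 < lbar)%N ->
  (m.-1 * lbar < n)%N ->            (* m < 1 + n / lbar *)
  (1 <= k <= m)%N ->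
  #|F| = (2 ^ t)%N ->
  (n + k <= 2 ^ t)%N ->
  exists (C1 C2 : {set 'rV[F]_n}) (G : 'M[F]_(k, n)),
    [/\ is_CSS_code C1 C2 G,
        css_dist_ge C1 C2 (minn (n - m + 1) (m - k + 1))
      & forall (e l : nat), (e <= lbar)%N -> (l <= lbar)%N ->
        forall P : {mpoly F[e]}, (msize P <= l.+1)%N ->
        forall (A : 'I_k) (beta : F),
        exists (bs : 'I_n -> F) (omega : algC), `|omega| = 1 /\
          forall (u : 'I_e -> 'rV[F]_k) (x : {ffun 'I_e -> 'rV[F]_n}),
            phys_gate P bs (logical_ket C2 G u) x =
            omega * sgnF (beta * meval (fun j => u j 0 A) P) * logical_ket C2 G u x].
Proof.
move=> hl0 hmn0 /andP[hk1 hkm] ht hnk.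
have hm : (m <= n)%N.
  have := leq_pmulr m.-1 hl0; lia.
have hF : (n + k <= #|F|)%N by rewrite ht.
pose pts (i : 'I_(n + k)) : F := enum_val (widen_ord hF i).
have pts_inj : injective pts.
  by move=> i j /enum_val_inj /(congr1 val) /= h; apply: val_inj.
exists (C1 m pts), (C2 m pts), (G pts).
split.
- exact: css.
- split => x h1 h2.
  + exact: leq_trans (geq_minl _ _) (dist1 pts_inj hm hkm h1 h2).
  + exact: leq_trans (geq_minr _ _) (dist2 pts_inj hm hkm h1 h2).
- move=> e l he hl P hP A beta.
  exists (fun i => beta * (Lam pts i).[ga pts A]), 1; split; first by rewrite normr1.
  apply: (gate pts_inj hm hkm ht A beta hP).
  exact: leq_ltn_trans (leq_mul (leqnn _) hl) hmn0.
Qed.
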